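(* Let $\mathcal{R},\mathcal{V},\mathcal{R}',\mathcal{V}'$ be finite sets with $|\mathcal{R}|=|\mathcal{R}'|$. For any positive integer $k$, if a released table $\tau'$ on $(\mathcal{R}',\mathcal{V}')$ is $k$-anonymous, then $(\Delta,\tau')$ is $Pk$-anonymous for every privacy mechanism $\Delta=(\mathcal{R},\mathcal{V},\mathcal{R}',\mathcal{V}',\Pi,\Delta)$.
   Context: A table on $(\mathcal{R},\mathcal{V})$ is a map $\mathcal{R}\to\mathcal{V}$; $\mathcal{T}$, $\mathcal{T}'$ denote the sets of tables on $(\mathcal{R},\mathcal{V})$ and $(\mathcal{R}',\mathcal{V}')$. For sets $X,Y$, $X\to Y$ is the set of maps $X\to Y$. A privacy mechanism is $(\mathcal{R},\mathcal{V},\mathcal{R}',\mathcal{V}',\Pi,\Delta)$ with $\Pi$ uniformly distributed over bijections $\mathcal{R}\to\mathcal{R}'$ and $\Delta$ a random variable in $\mathcal{T}\to(\mathcal{R}\to\mathcal{V}')$; it is a privacy mechanism from $T$ to $T'$ (random variables on $\mathcal{T},\mathcal{T}'$) if $T,\Pi,\Delta$ are mutually independent and $\Delta(T)=T'\circ\Pi$. $\tau'$ is $k$-anonymous if for every $r'\in\mathcal{R}'$ there are at least $k$ elements $\hat r'\in\mathcal{R}'$ with $\tau'(\hat r')=\tau'(r')$. $(\Delta,\tau')$ is $Pk$-anonymous (real $k\ge1$) if for all random variables $T,T'$ such that $\Delta$ is a privacy mechanism from $T$ to $T'$ and all $r\in\mathcal{R}$, $r'\in\mathcal{R}'$, $\Pr[\Pi(r)=r'\mid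 T'=\tau']\le1/k$. *)

(* Defs.v *)
From HB Require Import structures.
From mathcomp Require Import all_boot all_order all_algebra.
From mathcomp Require Import all_classical all_reals all_analysis.
Set Implicit Arguments. Unset Strict Implicit. Unset Printing Implicit Defensive.
Import Order.TTheory GRing.Theory Num.Theory.
Local Open Scope classical_set_scope.
Local Open Scope ring_scope.

Definition is_rv (d : measure_display) (Omega : measurableType d) (A : finType)
  (X : Omega -> A) : Prop :=
  forall a : A, measurable (X @^-1` [set a]).

Definition pr (d : measure_display) (Omega : measurableType d) (Rr : realType)
  (P : probability Omega Rr) (E : set Omega) : Rr := fine (P E).

(* Conditional probability Pr[E | F] = Pr[E /\ F] / Pr[F] (= 0 if Pr[F] = 0). *)
Definition cond_pr (d : measure_display) (Omega : measurableType d) (Rr : realType)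
  (P : probability Omega Rr) (E F : set Omega) : Rr :=
  pr P (E `&` F) / pr P F.

Definition indep3 (d : measure_display) (Omega : measurableType d) (Rr : realType)
  (P : probability Omega Rr) (A B C : finType)
  (X : Omega -> A) (Y : Omega -> B) (Z : Omega -> C) : Prop :=
  forall (SA : {set A}) (SB : {set B}) (SC : {set C}),
    P ([set w | X w \in SA] `&` [set w | Y w \in SB] `&` [set w | Z w \in SC])
    = (P [set w | X w \in SA] * P [set w | Y w \in SB] * P [set w | Z w \in SC])%E.

Notation table R V := {ffun R -> V}.

Definition bijectiveb (R R' : finType) (f : {ffun R -> R'}) : bool :=
  injectiveb f && [forall y : R', exists x : R, f x == y].

Definition bijs (R R' : finType) : {set {ffun R -> R'}} :=
  [set f | bijectiveb f].

Definition uniform_bij (d : measure_display) (Omega : measurableType d) (Rr : realType)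
  (P : probability Omega Rr) (R R' : finType) (Pi : Omega -> {ffun R -> R'}) : Prop :=
  forall f : {ffun R -> R'},
    pr P [set w | Pi w = f] = if f \in bijs R R' then (#|bijs R R'|%:R)^-1 else 0.

Definition privacy_mechanism (d : measure_display) (Omega : measurableType d) (Rr : realType)
  (P : probability Omega Rr) (R V R' V' : finType)
  (Pi : Omega -> {ffun R -> R'})
  (Delta : Omega -> {ffun table R V -> table R V'}) : Prop :=
  is_rv Pi /\ uniform_bij P Pi /\ is_rv Delta.

Definition mechanism_from (d : measure_display) (Omega : measurableType d) (Rr : realType)
  (P : probability Omega Rr) (R V R' V' : finType)
  (Pi : Omega -> {ffun R -> R'})
  (Delta : Omega -> {ffun table R V -> table R V'})
  (T : Omega -> table R V) (T' : Omega -> table R' V') : Prop :=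
  [/\ is_rv T, is_rv T', indep3 P T Pi Delta &
      forall w r, Delta w (T w) r = T' w (Pi w r)].

Definition k_anonymous (R' V' : finType) (tau' : table R' V') (k : nat) : Prop :=
  forall r' : R', (k <= #|[set rh : R' | tau' rh == tau' r']|)%N.

Definition Pk_anonymous (d : measure_display) (Omega : measurableType d) (Rr : realType)
  (P : probability Omega Rr) (R V R' V' : finType)
  (Pi : Omega -> {ffun R -> R'})
  (Delta : Omega -> {ffun table R V -> table R V'})
  (tau' : table R' V') (k : Rr) : Prop :=
  forall (T : Omega -> table R V) (T' : Omega -> table R' V'),
    mechanism_from P Pi Delta T T' ->
    forall (r : R) (r' : R'),
      cond_pr P [set w | Pi w r = r'] [set w | T' w = tau'] <= k^-1.

(* Main.v *)
Require Import Defs.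
From HB Require Import structures.
From mathcomp Require Import all_boot all_order all_algebra.
From mathcomp Require Import all_classical all_reals all_analysis.
Import Order.TTheory GRing.Theory Num.Theory.
From mathcomp Require Import fingroup perm.
Set Implicit Arguments. Unset Strict Implicit.
Definition goodf (R R' V' : finType) (tau' : {ffun R' -> V'}) (u : R -> V')
  (f : {ffun R -> R'}) : bool := bijectiveb f && [forall x, tau' (f x) == u x].

Lemma swap_le (R R' V' : finType) (tau' : {ffun R' -> V'}) (u : R -> V') (r : R) (r' y : R') :
  tau' y = tau' r' ->
  (#|[set f | goodf tau' u f && (f r == r')]| <= #|[set f | goodf tau' u f && (f r == y)]|)%N.
Proof.
move=> ty.
pose g (f : {ffun R -> R'}) : {ffun R -> R'} := [ffun x => tperm r' y (f x)].
have ginj : injective g.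
  move=> f1 f2 e; apply/ffunP => x.
  by have := congr1 (fun h : {ffun R -> R'} => h x) e; rewrite /g !ffunE => /perm_inj.
rewrite -(card_imset _ ginj); apply: subset_leq_card; apply/fintype.subsetP => h.
case/imsetP => f; rewrite inE => /andP [/andP [/andP [/injectiveP fi /forallP fs] /forallP fc] /eqP fr] ->.
rewrite inE /g ffunE fr tpermL eqxx andbT /goodf; apply/andP; split; [apply/andP; split|].
- apply/injectiveP => x1 x2; rewrite !ffunE => /perm_inj; exact: fi.
- apply/forallP => z; have /existsP [x /eqP hx] := fs (tperm r' y z).
  by apply/existsP; exists x; rewrite ffunE hx tpermK.
- apply/forallP => x; rewrite ffunE; have /eqP <- := fc x.
  case: tpermP => [->|->|_ _] //; by rewrite ty.
Qed.

Lemma comb (R R' V' : finType) (tau' : {ffun R' -> V'}) (u : R -> V') (r : R) (r' : R') (k : nat) :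
  k_anonymous tau' k ->
  (k * #|[set f | goodf tau' u f && (f r == r')]| <= #|[set f | goodf tau' u f]|)%N.
Proof.
move=> hk.
have -> : #|[set f | goodf tau' u f]| = (\sum_y #|[set f | goodf tau' u f && (f r == y)]|)%N.
  rewrite -sum1_card (partition_big (fun f : {ffun R -> R'} => f r) xpredT) //.
  apply: eq_bigr => y _; rewrite -sum1_card; apply: eq_bigl => f; by rewrite !inE.
rewrite (bigID (fun y => tau' y == tau' r')) /=.
apply: leq_trans (leq_addr _ _).
apply: (@leq_trans (\sum_(y | tau' y == tau' r') #|[set f | goodf tau' u f && (f r == r')]|)); last first.
  by apply: leq_sum => y /eqP hy; apply: swap_le.
rewrite sum_nat_const; apply: leq_mul => //.
have := hk r'. congr (_ <= _)%N. apply: eq_card => y; apply/idP/idP; rewrite in_setE /= ?inE; done.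
Qed.

Local Open Scope ring_scope.
Local Open Scope classical_set_scope.

Section S.
Variables (d : measure_display) (Omega : measurableType d) (Rr : realType)
  (P : probability Omega Rr).
Lemma prE_fin (F : set Omega) : measurable F -> P F \is a fin_num.
Proof. by move=> mF; apply: fin_num_measure. Qed.

Lemma decomp (I : finType) (Z : Omega -> I) (F : set Omega) :
  is_rv Z -> measurable F ->
  pr P F = \sum_(i : I) pr P (F `&` Z @^-1` [set i]).
Proof.
move=> hZ mF.
have eF : F = \bigcup_(i in [set: I]) (F `&` Z @^-1` [set i]).
  apply/seteqP; split => [w Fw|w [i _ [Fw _]]] //.
  by exists (Z w) => //; split.
rewrite /pr {1}eF measure_fin_bigcup //; first last.
- by move=> i _; apply: measurableI => //; apply: hZ.
- move=> i j _ _ [w [[_ /= ->] [_ /= ->]]] //.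
- exact: (@finite_finset I).
rewrite (fsbigE (enum I)) ?enum_uniq //; last by move=> i _; rewrite mem_enum.
rewrite -sum_fine; last first.
  by move=> i _; apply: prE_fin; apply: measurableI => //; apply: hZ.
rewrite (eq_bigl xpredT); last by move=> i; rewrite in_setT.
by rewrite big_enum /=; apply: eq_bigl => i; rewrite inE.
Qed.

Lemma rv_pre (A : finType) (X : Omega -> A) (S : set A) :
  is_rv X -> measurable (X @^-1` S).
Proof.
move=> hX.
have -> : X @^-1` S = \bigcup_(a in S) X @^-1` [set a].
  by apply/seteqP; split=> [w Sw|w [a Sa /= ->]] //; exists (X w).
apply: fin_bigcup_measurable; first exact: (@finite_finset A).
by move=> a _; apply: hX.
Qed.
End S.

Theorem lemma1 (d : measure_display) (Omega : measurableType d) (Rr : realType)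
  (P : probability Omega Rr) (R V R' V' : finType)
  (hcard : #|R| = #|R'|) (k : nat) (hk : (0 < k)%N)
  (Pi : Omega -> {ffun R -> R'})
  (Delta : Omega -> {ffun table R V -> table R V'})
  (tau' : table R' V') :
  privacy_mechanism P Pi Delta ->
  k_anonymous tau' k ->
  Pk_anonymous P Pi Delta tau' (k%:R).
Proof.
move=> [hPi [hunif hDelta]] hka T T' [hT hT' hind hrel] r r'.
set E := [set w | T' w = tau'].
set A := [set w | Pi w r = r'].
pose Z w := (T w, Delta w, Pi w).
have hZ : is_rv Z.
  move=> [[t dl] p].
  have -> : Z @^-1` [set (t, dl, p)] =
      T @^-1` [set t] `&` Delta @^-1` [set dl] `&` Pi @^-1` [set p].
    apply/seteqP; split => w /=; rewrite /Z; first by move=> [-> -> ->].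
    by case=> [[-> ->] ->].
  by apply: measurableI; [apply: measurableI; [apply: hT|apply: hDelta]|apply: hPi].
have mE : measurable E by exact: (hT' tau').
have mA : measurable A by exact: (rv_pre [set f : {ffun R -> R'} | f r = r'] hPi).
have fin X : measurable X -> P X \is a fin_num by move=> mX; apply: fin_num_measure.
have pr_ge0 X : 0 <= pr P X by apply: fine_ge0; apply: measure_ge0.
have pr_le X Y : measurable X -> measurable Y -> X `<=` Y -> pr P X <= pr P Y.
  move=> mX mY XY; apply: fine_le; [exact: fin|exact: fin|].
  exact: (le_measure _ (mem_set mX) (mem_set mY) XY).
have setin (B : finType) (X : Omega -> B) (b : B) :
    [set w | X w \in [set b]%SET] = X @^-1` [set b].
  by apply/seteqP; split => w /=; rewrite inE => /eqP.
have atomE z : pr P (Z @^-1` [set z]) =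
    pr P (T @^-1` [set z.1.1]) * pr P (Pi @^-1` [set z.2]) * pr P (Delta @^-1` [set z.1.2]).
  case: z => [[t dl] p] /=.
  have -> : Z @^-1` [set (t, dl, p)] =
      T @^-1` [set t] `&` Pi @^-1` [set p] `&` Delta @^-1` [set dl].
    apply/seteqP; split => w /=; rewrite /Z; first by move=> [-> -> ->].
    by case=> [[-> ->] ->].
  rewrite /pr; have := hind [set t]%SET [set p]%SET [set dl]%SET; rewrite !setin => ->.
  rewrite /pr fineM ?fineM //; try apply: fin; try exact: hT; try exact: hDelta; try exact: hPi.
  by rewrite fin_numM ?fin //; try exact: hT; try exact: hPi.
set N := #|bijs R R'|.
have piE p : pr P (Pi @^-1` [set p]) = if p \in bijs R R' then N%:R^-1 else 0.
  exact: hunif.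
have mZ z : measurable (Z @^-1` [set z]) by apply: hZ.
have atomF (F : set Omega) (b : bool) z : measurable F ->
    (z.2 \in bijs R R' -> forall w, Z w = z -> (F w <-> b)) ->
    pr P (F `&` Z @^-1` [set z]) = b%:R * pr P (Z @^-1` [set z]).
  move=> mF hF.
  case: (boolP (z.2 \in bijs R R')) => hb; last first.
    have h0 : pr P (Z @^-1` [set z]) = 0 by rewrite atomE piE (negbTE hb) mulr0 mul0r.
    rewrite h0 mulr0; apply/eqP; rewrite eq_le pr_ge0 andbT -h0.
    by apply: pr_le; [exact: measurableI|exact: mZ|exact: subIsetr].
  case: b hF => hF.
    rewrite mul1r; congr (pr P _); apply/seteqP; split; first exact: subIsetr.
    by move=> w hw; split => //; apply/(hF hb w hw).
  rewrite mul0r; have -> : F `&` Z @^-1` [set z] = set0.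
    by apply/seteqP; split => // w [Fw hw]; have := (hF hb w hw).1 Fw.
  by rewrite /pr measure0.
have Eiff w t dl p : p \in bijs R R' -> Z w = (t, dl, p) ->
    (E w <-> goodf tau' (dl t) p).
  rewrite inE => hb [ht hd hp]; rewrite /E /goodf hb /=; split.
    by move=> hE; apply/forallP => x; rewrite -hE -hp -hrel ht hd.
  move/forallP => hc; apply/ffunP => y.
  have /andP [_ /forallP hs] := hb; have /existsP [x /eqP <-] := hs y.
  by rewrite -[in LHS]hp -hrel ht hd (eqP (hc x)).
have sumE : pr P E =
    \sum_(z : table R V * table (table R V) (table R V') * table R R') (goodf tau' (z.1.2 z.1.1) z.2)%:R * pr P (Z @^-1` [set z]).
  rewrite (decomp P hZ mE); apply: eq_bigr => -[[t dl] p] _.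
  by apply: atomF => // /= hb w hw; apply: Eiff hw.
have sumAE : pr P (A `&` E) =
    \sum_(z : table R V * table (table R V) (table R V') * table R R') (goodf tau' (z.1.2 z.1.1) z.2 && (z.2 r == r'))%:R * pr P (Z @^-1` [set z]).
  rewrite (decomp P hZ (measurableI _ _ mA mE)); apply: eq_bigr => -[[t dl] p] _.
  apply: atomF; first exact: measurableI.
  move=> /= hb w hw; rewrite (Eiff w t dl p hb hw); split.
    case=> hA ->; move: hw => [_ _ hp].
    by move: hA; rewrite /A /= hp => ->; rewrite eqxx.
  case/andP => -> /eqP hr; split => //; move: hw => [_ _ hp].
  by rewrite /A /= hp.
pose beta (q : table R V * table (table R V) (table R V')) :=
  pr P (T @^-1` [set q.1]) * pr P (Delta @^-1` [set q.2]) * N%:R^-1.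
have beta_ge0 q : 0 <= beta q.
  by rewrite /beta !mulr_ge0 // invr_ge0 ler0n.
have termE (b : bool) z : (b -> z.2 \in bijs R R') ->
    b%:R * pr P (Z @^-1` [set z]) = b%:R * beta z.1.
  case: b => hb; last by rewrite !mul0r.
  by rewrite atomE piE hb // /beta mulrAC.
have gb t (dl : table (table R V) (table R V')) p : goodf tau' (dl t) p -> p \in bijs R R'.
  by rewrite inE => /andP [].
have sumq (c : table R V * table (table R V) (table R V') -> table R R' -> bool) :
    \sum_(z : table R V * table (table R V) (table R V') * table R R') (c z.1 z.2)%:R * beta z.1
    = \sum_q beta q * #|[set p | c q p]%SET|%:R.
  rewrite -(pair_bigA _ (fun a b => (c a b)%:R * beta a)) /=; apply: eq_bigr => q _.
  rewrite mulr_natr -sumr_const [RHS]big_mkcond /=; apply: eq_bigr => p _.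
  by rewrite inE; case: (c q p); rewrite ?mul1r ?mul0r.
have key : k%:R * pr P (A `&` E) <= pr P E.
  rewrite sumE sumAE.
  rewrite (eq_bigr (fun z : table R V * table (table R V) (table R V') * table R R' => (goodf tau' (z.1.2 z.1.1) z.2 && (z.2 r == r'))%:R * beta z.1)); last first.
    by move=> z _; apply: termE => /andP [/gb].
  rewrite [X in _ <= X](eq_bigr (fun z : table R V * table (table R V) (table R V') * table R R' => (goodf tau' (z.1.2 z.1.1) z.2)%:R * beta z.1)); last first.
    by move=> z _; apply: termE => /gb.
  rewrite (sumq (fun q p => goodf tau' (q.2 q.1) p && (p r == r'))).
  rewrite (sumq (fun q p => goodf tau' (q.2 q.1) p)).
  rewrite mulr_sumr; apply: ler_sum => q _.
  rewrite mulrCA -natrM; apply: ler_wpM2l => //; rewrite ler_nat.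
  exact: comb.
rewrite /cond_pr; case: (eqVneq (pr P E) 0) => hE0.
  by rewrite hE0 invr0 mulr0 invr_ge0 ler0n.
have hEp : 0 < pr P E by rewrite lt0r hE0 pr_ge0.
have kp : 0 < k%:R :> Rr by rewrite ltr0n.
rewrite ler_pdivrMr // -(ler_pM2l kp) mulrA mulfV ?mul1r //.
by rewrite gt_eqF.
Qed.
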